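(* Let $s=s_1+is_2$ with $s_1>0$, $s_2\in\mathbb R$ (the same $s_1$ as in $\alpha,\beta$). Then for all $x\in\Gamma_\rho$ and $y\in\Gamma_R$, $$|\rho_s(\widetilde x,y)/s|\ge d,\qquad \operatorname{Re}[\rho_s(\widetilde x,y)]\ge\rho\,\hat\sigma(\rho)=\frac{\sigma_0 d}{m+1}.$$
   Context: Let $0<R<\rho$, $d=\rho-R$, $\Gamma_r=\{|x|=r\}$. Fix $s_1>0$, $\sigma_0>0$ and an integer $m\ge1$; let $\sigma(r)=0$ for $0\le r\le R$, $\sigma(r)=\sigma_0((r-R)/(\rho-R))^m$ for $R\le r\le\rho$, $\sigma(r)=\sigma_0$ for $r\ge\rho$; $\alpha(r)=1+s_1^{-1}\sigma(r)$; $\beta(r)=\frac1r\int_0^r\alpha(\tau)d\tau=1+s_1^{-1}\hat\sigma(r)$, with $\hat\sigma(r)=\frac1r\int_R^r\sigma(\tau)d\tau$ for $r\ge R$. The real stretched coordinates of $x\in\mathbb R^3$ are $\widetilde x=\beta(|x|)\,x$ (so $|\widetilde x|=\int_0^{|x|}\alpha$ and $\widetilde x$ has the same angular coordinates as $x$). The complex distance is $\rho_s(\widetilde x,y)=\big[s^2|\widetilde x-y|^2\big]^{1/2}$, where $z^{1/2}$ is the branch analytic on $\mathbb C\setminus(-\infty,0]$ with positive real part. *)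

(* Defs.v *)
From Stdlib Require Import Reals Lra ClassicalEpsilon.
Open Scope R_scope.

(* Riemann integral of f over [a,b] (Stdlib RiemannInt), with an arbitrary
   integrability certificate chosen classically; 0 if f is not integrable.
   (RiemannInt does not depend on the certificate: RiemannInt_P5.) *)
Definition Rint (f : R -> R) (a b : R) : R :=
  match excluded_middle_informative (exists _ : Riemann_integrable f a b, True) with
  | left H => RiemannInt (proj1_sig (constructive_indefinite_description _ H))
  | right _ => 0
  end.

(* Absorbing-layer profile sigma, with parameters R0 (= R), rho, sigma0, m. *)
Definition sigma (R0 rho sigma0 : R) (m : nat) (r : R) : R :=
  if Rle_dec r R0 then 0
  else if Rle_dec r rho then sigma0 * ((r - R0) / (rho - R0)) ^ m
  else sigma0.

Definition alpha (R0 rho sigma0 s1 : R) (m : nat) (r : R) : R :=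
  1 + / s1 * sigma R0 rho sigma0 m r.

Definition beta (R0 rho sigma0 s1 : R) (m : nat) (r : R) : R :=
  / r * Rint (alpha R0 rho sigma0 s1 m) 0 r.

Definition sigma_hat (R0 rho sigma0 : R) (m : nat) (r : R) : R :=
  / r * Rint (sigma R0 rho sigma0 m) R0 r.

Definition vec3 : Type := (R * R * R)%type.
Definition vnorm (x : vec3) : R :=
  let '(a, b, c) := x in sqrt (a * a + b * b + c * c).
Definition vscale (t : R) (x : vec3) : vec3 :=
  let '(a, b, c) := x in (t * a, t * b, t * c).
Definition vsub (x y : vec3) : vec3 :=
  let '(a, b, c) := x in let '(a', b', c') := y in (a - a', b - b', c - c').

Definition stretch (R0 rho sigma0 s1 : R) (m : nat) (x : vec3) : vec3 :=
  vscale (beta R0 rho sigma0 s1 m (vnorm x)) x.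

Definition C : Type := (R * R)%type.
Definition Re (z : C) : R := fst z.
Definition Im (z : C) : R := snd z.
Definition Cmul (z w : C) : C :=
  (fst z * fst w - snd z * snd w, fst z * snd w + snd z * fst w).
Definition Cabs (z : C) : R := sqrt (fst z * fst z + snd z * snd z).
Definition Cinv (z : C) : C :=
  let n := fst z * fst z + snd z * snd z in (fst z / n, - snd z / n).
Definition Cdiv (z w : C) : C := Cmul z (Cinv w).
Definition RtoC (t : R) : C := (t, 0).

(* Principal square root: analytic on C \ (-oo,0], positive real part there. *)
Definition Csqrt (z : C) : C :=
  let a := fst z in let b := snd z in
  (sqrt ((Cabs z + a) / 2),
   (if Rlt_dec b 0 then -1 else 1) * sqrt ((Cabs z - a) / 2)).

Definition rho_s (R0 rho sigma0 s1 : R) (m : nat) (s : C) (x y : vec3) : C :=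
  let t := vnorm (vsub (stretch R0 rho sigma0 s1 m x) y) in
  Csqrt (Cmul (Cmul s s) (RtoC (t * t))).

(* Main.v *)
Require Import Defs.
From Stdlib Require Import Reals Lra Psatz ClassicalEpsilon.
From Coquelicot Require Import Coquelicot.
Import Defs.
Open Scope R_scope.

Lemma Rint_eq f a b l : is_RInt f a b l -> Rint f a b = l.
Proof.
  intros H. assert (E : ex_RInt f a b) by (exists l; exact H).
  unfold Rint; destruct excluded_middle_informative as [h|n].
  - rewrite <- (RInt_Reals f a b). now apply is_RInt_unique.
  - exfalso; apply n; exists (ex_RInt_Reals_0 _ _ _ E); exact I.
Qed.

Lemma sigma_int (a0 rho sigma0 : R) (m : nat) : 0 < a0 -> a0 < rho ->
  is_RInt (sigma a0 rho sigma0 m) a0 rho (sigma0 * (rho - a0) / (INR m + 1)).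
Proof.
  intros hR hr.
  set (d := rho - a0).
  assert (hd : 0 < d) by (unfold d; lra).
  assert (hm : 0 < INR m + 1) by (pose proof (pos_INR m); lra).
  apply is_RInt_ext with (f := fun r => sigma0 * ((r - a0) / d) ^ m).
  { intros x [h1 h2]. rewrite Rmin_left in h1 by lra. rewrite Rmax_right in h2 by lra.
    unfold sigma. destruct Rle_dec; [lra|]. destruct Rle_dec; [reflexivity|lra]. }
  set (F := fun r => sigma0 * d / (INR m + 1) * ((r - a0) / d) ^ (S m)).
  assert (HF : is_RInt (fun r => sigma0 * ((r - a0) / d) ^ m) a0 rho (minus (F rho) (F a0))).
  { apply (is_RInt_derive (V:=R_CompleteNormedModule) F).
  - intros x _. unfold F. auto_derive; [auto|]. change (match m with 0%nat => 1 | S _ => INR m + 1 end) with (INR (S m)). rewrite S_INR. unfold Rminus, Rdiv. set (q := (x + - a0) * / d). field. lra.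
  - intros x _. apply (ex_derive_continuous (fun r : R => sigma0 * ((r - a0) / d) ^ m)). auto_derive. auto. }
  replace (sigma0 * d / (INR m + 1)) with (minus (F rho) (F a0)); [exact HF|].
  unfold F, minus, plus, opp; simpl. fold d.
  assert (E : (a0 - a0) / d = 0) by (field; lra).
  assert (E2 : d / d = 1) by (field; lra).
  rewrite E, E2, pow1, !Rmult_0_l, Rmult_1_l. field. lra.
Qed.

Lemma is_RInt_val (f : R -> R) a b (l l' : R) : is_RInt f a b l -> l = l' -> is_RInt f a b l'.
Proof. intros H ->; exact H. Qed.

Lemma sigma_int0 (a0 rho sigma0 : R) (m : nat) : 0 < a0 ->
  is_RInt (sigma a0 rho sigma0 m) 0 a0 0.
Proof.
  intros ha.
  apply is_RInt_ext with (f := fun _ => 0).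
  { intros x [h1 h2]. rewrite Rmax_right in h2 by lra.
    unfold sigma. destruct Rle_dec; [reflexivity|lra]. }
  pose proof (is_RInt_const (V:=R_NormedModule) 0 a0 0) as H.
  eapply is_RInt_val; [exact H|]. unfold scal; simpl; unfold mult; simpl; ring.
Qed.

Lemma alpha_int (a0 rho sigma0 s1 : R) (m : nat) : 0 < a0 -> a0 < rho ->
  is_RInt (alpha a0 rho sigma0 s1 m) 0 rho
    (rho + / s1 * (sigma0 * (rho - a0) / (INR m + 1))).
Proof.
  intros ha hr.
  set (K := sigma0 * (rho - a0) / (INR m + 1)).
  pose proof (is_RInt_Chasles (V:=R_NormedModule) (sigma a0 rho sigma0 m) 0 a0 rho 0 K
    (sigma_int0 a0 rho sigma0 m ha) (sigma_int a0 rho sigma0 m ha hr)) as HS.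
  pose proof (is_RInt_scal (V:=R_NormedModule) _ 0 rho (/s1) _ HS) as HS2.
  pose proof (is_RInt_const (V:=R_NormedModule) 0 rho 1) as HC.
  pose proof (is_RInt_plus (V:=R_NormedModule) _ _ 0 rho _ _ HC HS2) as H.
  eapply is_RInt_ext in H.
  - eapply is_RInt_val; [exact H|]. unfold plus, scal; simpl; unfold mult; simpl. unfold K. ring.
  - intros; reflexivity.
Qed.

Lemma cs (a b c p q r : R) : (a*p+b*q+c*r) <= sqrt ((a*a+b*b+c*c)*(p*p+q*q+r*r)).
Proof.
  destruct (Rle_or_lt (a*p+b*q+c*r) 0) as [h|h].
  - pose proof (sqrt_pos ((a*a+b*b+c*c)*(p*p+q*q+r*r))); lra.
  - rewrite <- (sqrt_square (a*p+b*q+c*r)) by lra.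
    apply sqrt_le_1_alt.
    assert (0 <= (a*q-b*p)^2 + (a*r-c*p)^2 + (b*r-c*q)^2) by (apply Rplus_le_le_0_compat; [apply Rplus_le_le_0_compat|]; apply pow2_ge_0).
    nra.
Qed.
Lemma revtri (a b c p q r : R) :
  sqrt (a*a+b*b+c*c) - sqrt (p*p+q*q+r*r) <= sqrt ((a-p)*(a-p)+(b-q)*(b-q)+(c-r)*(c-r)).
Proof.
  set (A := (a-p)*(a-p)+(b-q)*(b-q)+(c-r)*(c-r)).
  set (B := p*p+q*q+r*r).
  assert (hA : 0 <= A) by (unfold A; pose proof (Rle_0_sqr (a-p)); pose proof (Rle_0_sqr (b-q)); pose proof (Rle_0_sqr (c-r)); unfold Rsqr in *; lra).
  assert (hB : 0 <= B) by (unfold B; pose proof (Rle_0_sqr p); pose proof (Rle_0_sqr q); pose proof (Rle_0_sqr r); unfold Rsqr in *; lra).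
  pose proof (cs (a-p) (b-q) (c-r) p q r) as H. fold A B in H.
  rewrite sqrt_mult in H by auto.
  assert (sqrt (a*a+b*b+c*c) <= sqrt A + sqrt B); [|lra].
  rewrite <- (sqrt_square (sqrt A + sqrt B)) by (pose proof (sqrt_pos A); pose proof (sqrt_pos B); lra).
  apply sqrt_le_1_alt.
  replace ((sqrt A + sqrt B) * (sqrt A + sqrt B)) with
    (sqrt A * sqrt A + sqrt B * sqrt B + 2 * (sqrt A * sqrt B)) by ring.
  rewrite !sqrt_sqrt by auto. unfold A, B in *. nra.
Qed.

Lemma csq (s1 s2 t : R) : 0 < s1 -> 0 <= t ->
  fst (Csqrt (Cmul (Cmul (s1,s2) (s1,s2)) (RtoC (t*t)))) = s1 * t /\
  snd (Csqrt (Cmul (Cmul (s1,s2) (s1,s2)) (RtoC (t*t)))) *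
  snd (Csqrt (Cmul (Cmul (s1,s2) (s1,s2)) (RtoC (t*t)))) = s2*s2*(t*t).
Proof.
  intros h1 ht.
  unfold Csqrt, Cmul, RtoC, Cabs; simpl.
  set (N := (s1*s1+s2*s2)*(t*t)).
  assert (hN : 0 <= N) by (unfold N; apply Rmult_le_pos; nra).
  assert (E : sqrt (((s1 * s1 - s2 * s2) * (t * t) - (s1 * s2 + s2 * s1) * 0) *
       ((s1 * s1 - s2 * s2) * (t * t) - (s1 * s2 + s2 * s1) * 0) +
       ((s1 * s1 - s2 * s2) * 0 + (s1 * s2 + s2 * s1) * (t * t)) *
       ((s1 * s1 - s2 * s2) * 0 + (s1 * s2 + s2 * s1) * (t * t))) = N).
  { rewrite <- (sqrt_square N hN). f_equal. unfold N. ring. }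
  rewrite E. split.
  - replace ((N + ((s1 * s1 - s2 * s2) * (t * t) - (s1 * s2 + s2 * s1) * 0)) / 2)
      with ((s1*t)*(s1*t)) by (unfold N; field).
    apply sqrt_square. nra.
  - replace ((N - ((s1 * s1 - s2 * s2) * (t * t) - (s1 * s2 + s2 * s1) * 0)) / 2)
      with ((s2*t)*(s2*t)) by (unfold N; field).
    assert (Q : sqrt (s2 * t * (s2 * t)) * sqrt (s2 * t * (s2 * t)) = s2*t*(s2*t))
      by (apply sqrt_sqrt; nra).
    destruct Rlt_dec; nra.
Qed.

Theorem lemma4p2 (R0 rho s1 s2 sigma0 : R) (m : nat)
  (hR : 0 < R0) (hRrho : R0 < rho) (hs1 : 0 < s1) (hsig : 0 < sigma0)
  (hm : (1 <= m)%nat) :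
  forall x y : vec3, vnorm x = rho -> vnorm y = R0 ->
    Cabs (Cdiv (rho_s R0 rho sigma0 s1 m (s1, s2) x y) (s1, s2)) >= rho - R0 /\
    Re (rho_s R0 rho sigma0 s1 m (s1, s2) x y) >= rho * sigma_hat R0 rho sigma0 m rho /\
    rho * sigma_hat R0 rho sigma0 m rho = sigma0 * (rho - R0) / (INR m + 1).
Proof.
  rename R0 into a0.
  intros x y hx hy.
  set (K := sigma0 * (rho - a0) / (INR m + 1)).
  assert (hK : 0 <= K).
  { unfold K. pose proof (pos_INR m). apply Rle_mult_inv_pos; [|lra]. nra. }
  assert (HA := Rint_eq _ _ _ _ (alpha_int a0 rho sigma0 s1 m hR hRrho)).
  assert (HS := Rint_eq _ _ _ _ (sigma_int a0 rho sigma0 m hR hRrho)).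
  fold K in HA, HS.
  assert (Hsh : rho * sigma_hat a0 rho sigma0 m rho = K).
  { unfold sigma_hat. rewrite HS. field. lra. }
  rewrite Hsh.
  set (b := beta a0 rho sigma0 s1 m rho).
  assert (Hb : b * rho = rho + / s1 * K).
  { unfold b, beta. rewrite HA. field. lra. }
  assert (hb : 0 <= b).
  { assert (0 <= b * rho). { rewrite Hb. pose proof (Rinv_0_lt_compat s1 hs1). nra. } nra. }
  set (t := vnorm (vsub (stretch a0 rho sigma0 s1 m x) y)).
  assert (Ht : rho + / s1 * K - a0 <= t).
  { unfold t, stretch. rewrite hx. fold b. rewrite <- Hb, <- hx, <- hy.
    destruct x as [[x1 x2] x3], y as [[y1 y2] y3]. unfold vnorm, vsub, vscale.
    pose proof (revtri (b*x1) (b*x2) (b*x3) y1 y2 y3) as H.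
    replace (b * x1 * (b * x1) + b * x2 * (b * x2) + b * x3 * (b * x3)) with
      ((b*b) * (x1*x1+x2*x2+x3*x3)) in H by ring.
    rewrite sqrt_mult, sqrt_square in H; try lra; try nra. }
  assert (ht0 : 0 <= t) by (unfold t; destruct (vsub _ _) as [[? ?] ?]; apply sqrt_pos).
  assert (hsK : 0 <= / s1 * K) by (pose proof (Rinv_0_lt_compat s1 hs1); nra).
  unfold rho_s. fold t.
  destruct (csq s1 s2 t hs1 ht0) as [E1 E2].
  set (w := Csqrt (Cmul (Cmul (s1, s2) (s1, s2)) (RtoC (t * t)))) in *.
  clearbody w. destruct w as [w1 w2]; simpl in E1, E2.
  split; [|split; [|reflexivity]].
  - unfold Cabs, Cdiv, Cmul, Cinv; simpl.
    set (n := s1*s1+s2*s2).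
    assert (hn : 0 < n) by (unfold n; nra).
    replace ((w1 * (s1 / n) - w2 * (- s2 / n)) * (w1 * (s1 / n) - w2 * (- s2 / n)) +
      (w1 * (- s2 / n) + w2 * (s1 / n)) * (w1 * (- s2 / n) + w2 * (s1 / n)))
      with ((w1 * w1 + w2 * w2) * n / (n * n)) by (unfold n in *; field; lra).
    rewrite E2, E1.
    replace ((s1 * t * (s1 * t) + s2 * s2 * (t * t)) * n / (n * n)) with (t * t)
      by (unfold n in *; field; lra).
    rewrite sqrt_square by lra. lra.
  - unfold Re; simpl. rewrite E1.
    assert (K <= s1 * t); [|lra].
    assert (s1 * (/ s1 * K) = K) by (field; lra).
    assert (s1*(rho + /s1*K - a0) <= s1*t) by (apply Rmult_le_compat_l; lra).
    assert (0 <= s1 * (rho - a0)) by (apply Rmult_le_pos; lra).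
    assert (s1*(rho + /s1*K - a0) = s1*(rho - a0) + s1*(/s1*K)) by ring. lra.
Qed.
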